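(* Let $\alpha,n\in\mathbb{Q}$ with $n\neq0$. The torsion subgroup of $E_{\alpha,-n^2}(\mathbb{Q})$, where $$E_{\alpha,-n^2}:\ y^2=x^3+\alpha x^2-n^2x,$$ is not isomorphic to $\mathbb{Z}/2\mathbb{Z}\times\mathbb{Z}/6\mathbb{Z}$. *)

(* Defs.v *)
From HB Require Import structures.
From mathcomp Require Import all_boot all_order all_algebra.
Set Implicit Arguments. Unset Strict Implicit. Unset Printing Implicit Defensive.
Import Order.TTheory GRing.Theory Num.Theory.
Local Open Scope ring_scope.

Inductive ecpoint : Type := EInf | EAff of rat & rat.

Definition on_curve (a b : rat) (P : ecpoint) : Prop :=
  match P with
  | EInf => True
  | EAff x y => y ^+ 2 = x ^+ 3 + a * x ^+ 2 + b * x
  end.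

(* Chord-and-tangent addition (Weierstrass form with a1=a3=a6=0, a2=a, a4=b). *)
Definition ec_add (a b : rat) (P Q : ecpoint) : ecpoint :=
  match P, Q with
  | EInf, _ => Q
  | _, EInf => P
  | EAff x1 y1, EAff x2 y2 =>
      if x1 == x2 then
        if y1 == - y2 then EInf
        else
          let l := (3 * x1 ^+ 2 + 2 * a * x1 + b) / (2 * y1) in
          let x3 := l ^+ 2 - a - x1 - x2 in
          EAff x3 (- (l * (x3 - x1) + y1))
      else
        let l := (y2 - y1) / (x2 - x1) in
        let x3 := l ^+ 2 - a - x1 - x2 in
        EAff x3 (- (l * (x3 - x1) + y1))
  end.

Fixpoint ec_mul (a b : rat) (k : nat) (P : ecpoint) : ecpoint :=
  match k with
  | O => EInf
  | S k' => ec_add a b P (ec_mul a b k' P)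
  end.

Definition torsion_point (a b : rat) (P : ecpoint) : Prop :=
  on_curve a b P /\ exists k : nat, (0 < k)%N /\ ec_mul a b k P = EInf.

Definition torsion_iso_Z2xZ6 (a b : rat) : Prop :=
  exists f : 'Z_2 * 'Z_6 -> ecpoint,
    [/\ injective f,
        (forall u, torsion_point a b (f u)),
        (forall P, torsion_point a b P -> exists u, f u = P) &
        (forall u v, f ((u.1 + v.1)%R, (u.2 + v.2)%R) = ec_add a b (f u) (f v))].

(* Main.v *)
Require Import Defs.
From mathcomp Require Import all_boot all_order all_algebra.
From mathcomp Require Import zify ring lra.
Set Implicit Arguments. Unset Strict Implicit. Unset Printing Implicit Defensive.
Import Order.TTheory GRing.Theory Num.Theory.
Local Close Scope ring_scope.

Lemma sq_coprime_nat (a b z : nat) : coprime a b -> a * b = z ^ 2 -> exists w, a = w ^ 2.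
Proof.
have [N aN] : exists N, a <= N by exists a.
elim: N a b z aN => [|N IH] a b z aN.
  by move: aN; rewrite leqn0 => /eqP -> _ _; exists 0.
case: (leqP a 1) => [a1|a1] cop eq.
  by case: a a1 {aN cop eq} => [|[|]] // _; [exists 0|exists 1].
have pp := pdiv_prime a1.
have pa := pdiv_dvd a.
set p := pdiv a in pp pa.
have pz : p %| z.
  have : p %| z * z by rewrite mulnn -eq dvdn_mulr.
  by rewrite Euclid_dvdM // orbb.
have pb : ~~ (p %| b).
  apply/negP => pb; have : p %| gcdn a b by rewrite dvdn_gcd pa pb.
  rewrite (eqP cop) dvdn1 => /eqP p1.
  by move: pp; rewrite p1.
have p2a : p ^ 2 %| a.
  have : p ^ 2 %| a * b by rewrite eq dvdn_exp2r.
  rewrite Gauss_dvdl //. by rewrite coprimeXl // prime_coprime.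
case/dvdnP: p2a => a1' ea. case/dvdnP: pz => z1 ez.
have p0 : 0 < p by apply prime_gt0.
have ha1 : a1' < a.
  rewrite ea -[X in X < _]muln1 ltn_mul2l; apply/andP; split.
    by rewrite lt0n; apply/eqP=> a0; move: a1; rewrite ea a0.
  by rewrite -[1]/(1^2) ltn_exp2r // prime_gt1.
have [w ew] : exists w, a1' = w ^ 2.
  apply: (IH a1' b z1).
  - by rewrite -ltnS; apply: leq_trans aN.
  - by move: cop; rewrite ea coprimeMl => /andP[].
  - apply/eqP; rewrite -(eqn_pmul2r (_ : 0 < p ^ 2)) ?expn_gt0 ?p0 //.
    by rewrite mulnAC -ea eq ez expnMn.
by exists (w * p); rewrite ea ew expnMn.
Qed.
Local Open Scope ring_scope.

Lemma coprimezE (a b : int) : coprimez a b = coprime `|a| `|b|.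
Proof. by rewrite /coprimez /gcdz /coprime. Qed.

Lemma sq_coprime_int (a b z : int) : coprimez a b -> a * b = z ^+ 2 ->
  exists s w v, (s = 1 \/ s = -1) /\ a = s * w ^+ 2 /\ b = s * v ^+ 2.
Proof.
rewrite coprimezE => cop eq.
have eqn : (`|a| * `|b| = `|z| ^ 2)%N by rewrite -abszM eq abszX.
have [w ew] := sq_coprime_nat cop eqn.
have [v ev] : exists v, `|b|%N = (v ^ 2)%N.
  by apply: (sq_coprime_nat (a := `|b|%N) (b := `|a|%N) (z := `|z|%N)); rewrite 1?coprime_sym // mulnC.
have ewz : `|a|%:Z = (w%:Z) ^+ 2 by by rewrite ew expr2 -PoszM mulnn.
have evz : `|b|%:Z = (v%:Z) ^+ 2 by by rewrite ev expr2 -PoszM mulnn.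
have z2 : 0 <= z ^+ 2 by rewrite sqr_ge0.
case: (lerP 0 a) => ha; case: (lerP 0 b) => hb.
- exists 1, w%:Z, v%:Z; split; first by left.
  by rewrite !mul1r -ewz -evz !gez0_abs.
- exists (-1), 0, v%:Z; split; first by right.
  split; last by rewrite -evz ltz0_abs //; ring.
  have : a = 0 by nia. by move->; ring.
- exists (-1), w%:Z, 0; split; first by right.
  split; first by rewrite -ewz ltz0_abs //; ring.
  have : b = 0 by nia. by move->; ring.
- exists (-1), w%:Z, v%:Z; split; first by right.
  by rewrite -ewz -evz !ltz0_abs //; split; ring.
Qed.

Lemma primez_dvdM (p : nat) (a b : int) : prime p -> (p %| a * b)%Z -> (p %| a)%Z || (p %| b)%Z.
Proof. by move=> pp; rewrite !dvdzE abszM /= Euclid_dvdM. Qed.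

Lemma copz_noprime (p : nat) (a b : int) : coprimez a b -> prime p -> (p %| a)%Z -> (p %| b)%Z -> False.
Proof.
rewrite /coprimez /gcdz => /eqP [] g1 pp; rewrite !dvdzE /= => pa pb.
have : (p %| gcdn `|a| `|b|)%N by rewrite dvdn_gcd pa pb.
by rewrite g1 dvdn1 => /eqP p1; move: pp; rewrite p1.
Qed.

Lemma copz_of (a b : int) : (forall p : nat, prime p -> (p %| a)%Z -> (p %| b)%Z -> False) -> coprimez a b.
Proof.
move=> H; rewrite /coprimez /gcdz; apply/eqP; congr Posz.
set g := gcdn _ _.
have ga : (g %| `|a|)%N by apply: dvdn_gcdl.
have gb : (g %| `|b|)%N by apply: dvdn_gcdr.
case: (ltngtP g 1) => // [g1|g1].
  have g0 : g = 0%N by case: g g1 {ga gb}.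
  move: ga gb; rewrite g0 !dvd0n => /eqP a0 /eqP b0.
  exfalso; apply: (H 2%N) => //; rewrite dvdzE /= ?a0 ?b0 // dvdn0.
  exfalso; apply: (H (pdiv g)); first by apply: pdiv_prime.
  by rewrite dvdzE /=; apply: dvdn_trans ga; apply: pdiv_dvd.
by rewrite dvdzE /=; apply: dvdn_trans gb; apply: pdiv_dvd.
Qed.

Lemma prime_dvd4 (p : nat) : prime p -> (p %| 4)%Z -> p = 2%N.
Proof.
move=> pp; rewrite dvdzE /= => d.
have := dvdn_leq (isT : (0 < 4)%N) d.
by case: p pp d => [|[|[|[|[|]]]]].
Qed.

Lemma prime_dvd3 (p : nat) : prime p -> (p %| 3)%Z -> p = 3%N.
Proof.
move=> pp; rewrite dvdzE /= => d.
have := dvdn_leq (isT : (0 < 3)%N) d.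
by case: p pp d => [|[|[|[|]]]].
Qed.

Lemma dvdz_sq (p : nat) (a : int) : prime p -> (p %| a ^+ 2)%Z -> (p %| a)%Z.
Proof. by move=> pp; rewrite expr2 => /(primez_dvdM pp); rewrite orbb. Qed.

Lemma parityz (u : int) : exists i, u = 2 * i \/ u = 2 * i + 1.
Proof.
exists (u %/ 2)%Z; have := divz_eq u 2; have := modz_ge0 u (isT : (2:int) != 0).
have := ltz_pmod u (isT : (0:int) < 2). lia.
Qed.

Lemma odd_sq8 (u : int) : ~~ (2 %| u)%Z -> exists a, u ^+ 2 = 8 * a + 1.
Proof.
move=> nu; have [i [ui|ui]] := parityz u.
  by move: nu; rewrite ui dvdz_mulr.
have [j [ij|ij]] := parityz i.
  by exists (j * (2 * j + 1)); rewrite ui ij; ring.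
by exists ((2 * j + 1) * (j + 1)); rewrite ui ij; ring.
Qed.

Lemma sq8 (v : int) : exists q, v ^+ 2 = 8 * q \/ v ^+ 2 = 8 * q + 1 \/ v ^+ 2 = 8 * q + 4.
Proof.
have [i [vi|vi]] := parityz v.
  have [j [ij|ij]] := parityz i.
    by exists (2 * j ^+ 2); left; rewrite vi ij; ring.
  by exists (2 * j ^+ 2 + 2 * j); right; right; rewrite vi ij; ring.
have [j [ij|ij]] := parityz i.
  by exists (j * (2 * j + 1)); right; left; rewrite vi ij; ring.
by exists ((2 * j + 1) * (j + 1)); right; left; rewrite vi ij; ring.
Qed.

Lemma mod8_contra (u e v : int) : ~~ (2 %| u)%Z -> ~~ (2 %| e)%Z ->
  (2 * u ^+ 2 - e ^+ 2) * (u ^+ 2 - 2 * e ^+ 2) = v ^+ 2 -> False.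
Proof.
move=> /odd_sq8 [a ha] /odd_sq8 [b hb]; have [q hq] := sq8 v.
rewrite ha hb => h.
have E : (2 * (8 * a + 1) - (8 * b + 1)) * (8 * a + 1 - 2 * (8 * b + 1)) =
  8 * (16 * a ^+ 2 - 40 * a * b + 16 * b ^+ 2 - a - b) - 1 by ring.
move: h; rewrite E; move: (16 * a ^+ 2 - 40 * a * b + 16 * b ^+ 2 - a - b) => t; lia.
Qed.

Lemma dvdz_comb (d a b x y c : int) : (d %| a)%Z -> (d %| b)%Z -> c = x * a + y * b -> (d %| c)%Z.
Proof. by move=> da db ->; apply: rpredD; [apply: dvdz_mull|apply: dvdz_mull]. Qed.

Lemma prime_dvd2 (p : nat) : prime p -> (p %| 2)%Z -> p = 2%N.
Proof.
move=> pp; rewrite dvdzE /= => d.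
have := dvdn_leq (isT : (0 < 2)%N) d.
by case: p pp d => [|[|[|]]].
Qed.

Lemma dvd3_dec (p : nat) (a : int) : prime p -> (p %| 3 * a)%Z -> p = 3%N \/ (p %| a)%Z.
Proof. move=> pp /(primez_dvdM pp) /orP[/(prime_dvd3 pp)|]; by [left|right]. Qed.

Lemma dvd4_dec (p : nat) (a : int) : prime p -> (p %| 4 * a)%Z -> p = 2%N \/ (p %| a)%Z.
Proof. move=> pp /(primez_dvdM pp) /orP[/(prime_dvd4 pp)|]; by [left|right]. Qed.

Lemma dvd2_dec (p : nat) (a : int) : prime p -> (p %| 2 * a)%Z -> p = 2%N \/ (p %| a)%Z.
Proof. move=> pp /(primez_dvdM pp) /orP[/(prime_dvd2 pp)|]; by [left|right]. Qed.

Definition case1 (u e A B : int) := e != 0 /\ u ^+ 2 - e ^+ 2 = A ^+ 2 /\ u ^+ 2 - 4 * e ^+ 2 = B ^+ 2.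


Local Close Scope ring_scope.
Local Open Scope ring_scope.


Lemma step3 (m k U e N : int) : 0 < k -> coprimez m k -> m = U ^+ 2 -> k = e ^+ 2 ->
  (m - k) * (m - 4 * k) = N ^+ 2 -> m != 0 -> m != k -> m != 4 * k ->
  exists u e' A B, case1 u e' A B /\ u ^+ 2 <= 4 * (`|m| + k).
Proof.
move=> k0 cmk mU ke eqN m0 mk m4k.
have nop := fun p pp pm pk => copz_noprime (p:=p) cmk pp pm pk.
clear cmk.
have mnorm : m <= `|m| by apply: ler_norm.
have e0 : e != 0 by apply/eqP=> e0; move: k0; rewrite ke e0 expr0n.
have U0 : U != 0 by apply/eqP=> U0; move: m0; rewrite mU U0 expr0n.
case: (boolP (3 %| (m - k))%Z) => h3.
- case/dvdzP: h3 => P1 hP1.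
  have eqN1 : 9 * (P1 * (P1 - k)) = N ^+ 2.
    rewrite -eqN; have -> : m - 4 * k = 3 * (P1 - k) by clear -hP1; lia.
    rewrite hP1; ring.
  have pN : (3 %| N)%Z.
    apply: (dvdz_sq (p := 3%N)) => //; rewrite -eqN1; apply: dvdz_mulr.
    by apply/dvdzP; exists 3.
  case/dvdzP: pN => N1 hN1.
  have eqN2 : P1 * (P1 - k) = N1 ^+ 2.
    have : 9 * (P1 * (P1 - k)) = 9 * N1 ^+ 2 by rewrite eqN1 hN1; ring.
    move: (P1 * (P1 - k)) (N1 ^+ 2) => ??; clear; lia.
  have cop : coprimez P1 (P1 - k).
    apply: copz_of => p pp p1 p2.
    have pk : (p %| k)%Z by apply: (dvdz_comb p1 p2 (x:=1) (y:=-1)); ring.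
    apply: (nop p pp) => //; apply: (dvdz_comb p1 pk (x:=3) (y:=1)); clear -hP1; lia.
  have [s [A [B [hs [hA hB]]]]] := sq_coprime_int cop eqN2.
  clear cop.
  have A2 := sqr_ge0 A; have B2 := sqr_ge0 B.
  case: hs => hs; rewrite hs in hA hB.
  + exists (2 * A), B, U, (2 * e); rewrite /case1 !exprMn; split.
      split; last by split; clear -hA hB hP1 mU ke; lia.
      apply/eqP=> B0; move: m4k hB; rewrite B0 expr0n /=; clear -hP1; lia.
    clear -hA hB hP1 mnorm A2 B2 k0; lia.
  + exists B, A, e, U; rewrite /case1; split.
      split; last by split; clear -hA hB hP1 mU ke; lia.
      apply/eqP=> A0; move: mk hA; rewrite A0 expr0n /=; clear -hP1; lia.
    clear -hA hB hP1 mnorm A2 B2 k0; lia.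
- have cop : coprimez (m - k) (m - 4 * k).
    apply: copz_of => p pp p1 p2.
    have p3k : (p %| 3 * k)%Z by apply: (dvdz_comb p1 p2 (x:=1) (y:=-1)); ring.
    case: (dvd3_dec pp p3k) => [p3|pk].
      by move: p1; rewrite p3 => p1; rewrite p1 in h3.
    apply: (nop p pp) => //; apply: (dvdz_comb p1 pk (x:=1) (y:=1)); ring.
  have [s [A [B [hs [hA hB]]]]] := sq_coprime_int cop eqN.
  clear cop.
  have A2 := sqr_ge0 A; have B2 := sqr_ge0 B.
  case: hs => hs; rewrite hs in hA hB.
  + exists U, e, A, B; rewrite /case1; split.
      by split => //; split; clear -hA hB mU ke; lia.
    clear -mU mnorm k0; lia.
  + exists (2 * e), U, B, (2 * A); rewrite /case1 !exprMn; split.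
      by split => //; split; clear -hA hB mU ke; lia.
    clear -ke mnorm k0; lia.
Qed.
Lemma step2 (m k e v : int) : 0 < k -> coprimez m k -> k = e ^+ 2 ->
  m * (m - k) * (m - 4 * k) = v ^+ 2 -> m != 0 -> m != k -> m != 4 * k ->
  exists U N, m = U ^+ 2 /\ (m - k) * (m - 4 * k) = N ^+ 2.
Proof.
move=> k0 cmk ke eqv m0 mk m4k.
have nop := fun p pp pm pk => copz_noprime (p:=p) cmk pp pm pk.
clear cmk.
case: (boolP (2 %| m)%Z) => h2.
- case/dvdzP: h2 => m1 hm1.
  have k2 : ~~ (2 %| k)%Z.
    by apply/negP => k2; apply: (nop 2%N) => //; apply/dvdzP; exists m1.
  have e2 : ~~ (2 %| e)%Z.
    by apply: contra k2; rewrite ke expr2 => h; apply: dvdz_mulr.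
  have eqv1 : 4 * (m1 * (2 * m1 - k) * (m1 - 2 * k)) = v ^+ 2 by rewrite -eqv hm1; ring.
  have : (2 %| v)%Z.
    apply: (dvdz_sq (p := 2%N)) => //; rewrite -eqv1; apply: dvdz_mulr.
    by apply/dvdzP; exists 2.
  case/dvdzP => v1 hv1.
  have eqv2 : m1 * (2 * m1 - k) * (m1 - 2 * k) = v1 ^+ 2.
    have : 4 * (m1 * (2 * m1 - k) * (m1 - 2 * k)) = 4 * v1 ^+ 2 by rewrite eqv1 hv1; ring.
    move: (m1 * (2 * m1 - k) * (m1 - 2 * k)) (v1 ^+ 2) => ??; clear; lia.
  clear eqv1 hv1 eqv v.
  have m10 : m1 != 0 by apply/eqP => m10; move: m0; rewrite hm1 m10 mul0r eqxx.
  case: (boolP (2 %| m1)%Z) => h21.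
  + case/dvdzP: h21 => m2 hm2.
    have eqv3 : 4 * (m2 * (4 * m2 - k) * (m2 - k)) = v1 ^+ 2 by rewrite -eqv2 hm2; ring.
    have : (2 %| v1)%Z.
      apply: (dvdz_sq (p := 2%N)) => //; rewrite -eqv3; apply: dvdz_mulr.
      by apply/dvdzP; exists 2.
    case/dvdzP => v2 hv2.
    have eqv4 : m2 * ((4 * m2 - k) * (m2 - k)) = v2 ^+ 2.
      have : 4 * (m2 * (4 * m2 - k) * (m2 - k)) = 4 * v2 ^+ 2 by rewrite eqv3 hv2; ring.
      rewrite mulrA; move: (m2 * (4 * m2 - k) * (m2 - k)) (v2 ^+ 2) => ??; clear; lia.
    have cop : coprimez m2 ((4 * m2 - k) * (m2 - k)).
      apply: copz_of => p pp p1 /(primez_dvdM pp) /orP[] p2.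
        apply: (nop p pp); first by apply: (dvdz_comb p1 p1 (x:=4) (y:=0)); rewrite hm1 hm2; ring.
        by apply: (dvdz_comb p1 p2 (x:=4) (y:=-1)); ring.
      apply: (nop p pp); first by apply: (dvdz_comb p1 p1 (x:=4) (y:=0)); rewrite hm1 hm2; ring.
      by apply: (dvdz_comb p1 p2 (x:=1) (y:=-1)); ring.
    have [s [u [w [hs [hu hw]]]]] := sq_coprime_int cop eqv4.
    clear cop.
    have u2 := sqr_ge0 u; have w2 := sqr_ge0 w.
    case: hs => hs; rewrite hs in hu hw.
    * exists (2 * u), (2 * w); rewrite !exprMn; split.
        by rewrite hm1 hm2 -[u ^+ 2]mul1r -hu; ring.
      by rewrite hm1 hm2 -[w ^+ 2]mul1r -hw; ring.
    * exfalso.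
      have m2n : m2 < 0.
        have : m2 != 0 by apply/eqP => m20; move: m10; rewrite hm2 m20 mul0r eqxx.
        clear -hu u2; move: hu u2; move: (u ^+ 2) => U; lia.
      have pos : 0 < (k - 4 * m2) * (k - m2) by apply: mulr_gt0; clear -m2n k0; lia.
      have E : (4 * m2 - k) * (m2 - k) = (k - 4 * m2) * (k - m2) by ring.
      move: hw pos w2; rewrite E; move: ((k - 4 * m2) * (k - m2)) (w ^+ 2) => ??; clear; lia.
  + have cop : coprimez m1 ((2 * m1 - k) * (m1 - 2 * k)).
      apply: copz_of => p pp p1 /(primez_dvdM pp) /orP[] p2.
        have pk : (p %| k)%Z by apply: (dvdz_comb p1 p2 (x:=2) (y:=-1)); ring.
        apply: (nop p pp) => //; apply: (dvdz_comb p1 p1 (x:=2) (y:=0)); rewrite hm1; ring.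
      have p2k : (p %| 2 * k)%Z by apply: (dvdz_comb p1 p2 (x:=1) (y:=-1)); ring.
      case: (dvd2_dec pp p2k) => [p2'|pk].
        by move: p1; rewrite p2' => p1; rewrite p1 in h21.
      apply: (nop p pp) => //; apply: (dvdz_comb p1 p1 (x:=2) (y:=0)); rewrite hm1; ring.
    have [s [u [w [hs [hu hw]]]]] := sq_coprime_int cop (etrans (mulrA _ _ _) eqv2).
    clear cop.
    have u2 := sqr_ge0 u; have w2 := sqr_ge0 w.
    case: hs => hs; rewrite hs in hu hw.
    * exfalso.
      have u2' : ~~ (2 %| u)%Z.
        by apply: contra h21; rewrite hu mul1r expr2 => h; apply: dvdz_mulr.
      have E8 : (2 * u ^+ 2 - e ^+ 2) * (u ^+ 2 - 2 * e ^+ 2) = w ^+ 2.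
        by rewrite -ke -[w ^+ 2]mul1r -hw hu mul1r.
      exact: (mod8_contra u2' e2 E8).
    * exfalso.
      have m1n : m1 < 0.
        clear -hu u2 m10; move: hu u2 m10; move: (u ^+ 2) => U; lia.
      have pos : 0 < (k - 2 * m1) * (2 * k - m1) by apply: mulr_gt0; clear -m1n k0; lia.
      have E : (2 * m1 - k) * (m1 - 2 * k) = (k - 2 * m1) * (2 * k - m1) by ring.
      move: hw pos w2; rewrite E; move: ((k - 2 * m1) * (2 * k - m1)) (w ^+ 2) => ??; clear; lia.
- have cop : coprimez m ((m - k) * (m - 4 * k)).
    apply: copz_of => p pp p1 /(primez_dvdM pp) /orP[] p2.
      apply: (nop p pp) => //; apply: (dvdz_comb p1 p2 (x:=1) (y:=-1)); ring.
    have p4k : (p %| 4 * k)%Z by apply: (dvdz_comb p1 p2 (x:=1) (y:=-1)); ring.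
    case: (dvd4_dec pp p4k) => [p2'|pk].
      by move: p1; rewrite p2' => p1; rewrite p1 in h2.
    exact: (nop p pp).
  have [s [u [w [hs [hu hw]]]]] := sq_coprime_int cop (etrans (mulrA _ _ _) eqv).
  clear cop.
  have u2 := sqr_ge0 u; have w2 := sqr_ge0 w.
  case: hs => hs; rewrite hs in hu hw.
  * by exists u, w; rewrite hw hu !mul1r.
  * exfalso.
    have mn : m < 0.
      clear -hu u2 m0; move: hu u2 m0; move: (u ^+ 2) => U; lia.
    have pos : 0 < (k - m) * (4 * k - m) by apply: mulr_gt0; clear -mn k0; lia.
    have E : (m - k) * (m - 4 * k) = (k - m) * (4 * k - m) by ring.
    move: hw pos w2; rewrite E; move: ((k - m) * (4 * k - m)) (w ^+ 2) => ??; clear; lia.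
Qed.

Local Close Scope ring_scope.
Local Open Scope ring_scope.
Local Close Scope ring_scope.
Definition chk := all (fun u => all (fun e => all (fun a => all (fun b =>
  ~~ [&& (0 < e)%N, u * u == e * e + a * a & u * u == 4 * (e * e) + b * b])
  (iota 0 13)) (iota 0 13)) (iota 0 13)) (iota 0 13).
Lemma chk_true : chk. Proof. vm_compute. reflexivity. Qed.

Local Open Scope ring_scope.
Lemma partC (m k Z : int) : 0 < k -> coprimez m k -> m * (m - k) * (m - 4 * k) * k = Z ^+ 2 ->
  m != 0 -> m != k -> m != 4 * k ->
  exists u e A B, case1 u e A B /\ u ^+ 2 <= 4 * (`|m| + k).
Proof.
move=> k0 cmk eqZ m0 mk m4k.
have nop := fun p pp pm pk => copz_noprime (p:=p) cmk pp pm pk.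
have cop : coprimez k (m * (m - k) * (m - 4 * k)).
  apply: copz_of => p pp pk /(primez_dvdM pp) /orP[/(primez_dvdM pp)/orP[]|] p1.
  - exact: (nop p pp).
  - by apply: (nop p pp) => //; apply: (dvdz_comb p1 pk (x:=1) (y:=1)); ring.
  - by apply: (nop p pp) => //; apply: (dvdz_comb p1 pk (x:=1) (y:=4)); ring.
have [s [e [v [hs [he hv]]]]] := sq_coprime_int cop (etrans (mulrC _ _) eqZ).
clear cop.
have e2 := sqr_ge0 e.
case: hs => hs; rewrite hs in he hv; last first.
  by exfalso; clear -he e2 k0; move: he e2; move: (e ^+ 2) => E; lia.
rewrite mul1r in he; rewrite mul1r in hv.
have [U [N [hU hN]]] := step2 k0 cmk he hv m0 mk m4k.
exact: (step3 k0 cmk hU he hN m0 mk m4k).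
Qed.

Lemma rat_sq_int (x : rat) (n : int) : x ^+ 2 = n%:~R -> exists z : int, x = z%:~R.
Proof.
move=> hx; exists (numq x).
have cnd := coprime_num_den x.
have hd : (numq x) ^+ 2 = n * (denq x) ^+ 2.
  apply: (@intr_inj rat); rewrite rmorphXn intrM rmorphXn /= numqE exprMn hx.
  by [].
have d1 : denq x = 1.
  have : (`|denq x| %| `|numq x| ^ 2)%N.
    by rewrite -abszX hd abszM dvdn_mull // abszX dvdn_exp.
  have cdn : coprime `|denq x| `|numq x| by rewrite coprime_sym.
  move=> /gcdn_idPl; rewrite (eqP (coprimeXr 2 cdn)) => h.
  by apply/eqP; rewrite -absz_denq -h.
by rewrite -[x in LHS]divq_num_den d1 divr1.
Qed.

Lemma partCq (X Y : rat) : Y ^+ 2 = X * (X - 1) * (X - 4) -> X != 0 -> X != 1 -> X != 4 ->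
  exists u e A B, case1 u e A B /\ u ^+ 2 <= 4 * (`|numq X| + denq X).
Proof.
move=> hY X0 X1 X4.
set m := numq X; set k := denq X.
have k0 : 0 < k := denq_gt0 X.
have kq0 : (k%:~R : rat) != 0 by rewrite intr_eq0 denq_neq0.
have hm : (m%:~R : rat) = X * k%:~R := numqE X.
have cmk : coprimez m k by rewrite coprimezE coprime_num_den.
have hZ : (Y * (k%:~R) ^+ 2) ^+ 2 = (m * (m - k) * (m - 4 * k) * k)%:~R.
  rewrite !intrM !intrD !intrN intrM hm exprMn hY.
  rewrite [(4%:~R : rat)]/(intmul 1 4) /=. ring.
have [z hz] := rat_sq_int hZ.
have eqZ : m * (m - k) * (m - 4 * k) * k = z ^+ 2.
  by apply: (@intr_inj rat); rewrite -hZ hz rmorphXn.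
apply: (partC k0 cmk eqZ).
- by rewrite /m numq_eq0.
- apply/eqP => mk; move: X1; rewrite -(divq_num_den X) -/m -/k mk divff //.
- apply/eqP => mk; move: X4; rewrite -(divq_num_den X) -/m -/k mk intrM mulfK //.
Qed.

Lemma height_div (p q : int) : 0 < q ->
  `|numq ((p%:~R : rat) / q%:~R)| <= `|p| /\ denq ((p%:~R : rat) / q%:~R) <= q.
Proof.
move=> q0; set x := (p%:~R : rat) / q%:~R.
have qn0 : (q%:~R : rat) != 0 by rewrite intr_eq0 gt_eqF.
have hx : numq x * q = p * denq x.
  apply: (@intr_inj rat); rewrite !intrM numqE /x mulrAC divfK //.
have hn : (`|numq x| * `|q| = `|p| * `|denq x|)%N by rewrite -!abszM hx.
have cop := coprime_num_den x.
have dq : (`|denq x| %| `|q|)%N.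
  have : (`|denq x| %| `|numq x| * `|q|)%N by rewrite hn dvdn_mull.
  by rewrite Gauss_dvdr // coprime_sym.
have q0n : (0 < `|q|)%N by rewrite absz_gt0 gt_eqF.
have dle : (`|denq x| <= `|q|)%N by apply: dvdn_leq.
split.
- have : (`|numq x| * `|q| <= `|p| * `|q|)%N by rewrite hn leq_mul2l dle orbT.
  by rewrite leq_pmul2r.
- by rewrite -(gez0_abs (ltW q0)) -absz_denq lez_nat.
Qed.

Lemma partD (u e A B : int) : case1 u e A B -> 0 < u -> 0 <= A -> 0 <= B ->
  exists X Y : rat, Y ^+ 2 = X * (X - 1) * (X - 4) /\ X != 0 /\ X != 1 /\ X != 4 /\
    `|numq X| <= 2 * u /\ denq X <= u.
Proof.
case=> e0 [hA hB] u0 A0 B0.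
have e2 : 0 < e ^+ 2.
  have : e ^+ 2 != 0 by rewrite expf_eq0 negb_and e0 orbT.
  have := sqr_ge0 e; move: (e ^+ 2) => E; lia.
have Au : A < u.
  rewrite ltNge; apply/negP => uA.
  have : u ^+ 2 <= A ^+ 2 by rewrite ler_pXn2r // ?nnegrE // ltW.
  clear -hA e2; move: hA e2; move: (u ^+ 2) (A ^+ 2) (e ^+ 2) => ???; lia.
have Bu : B <= u.
  rewrite leNgt; apply/negP => uB.
  have : u ^+ 2 < B ^+ 2 by rewrite ltr_pXn2r // ?nnegrE // ltW.
  clear -hB e2; move: hB e2; move: (u ^+ 2) (B ^+ 2) (e ^+ 2) => ???; lia.
set ua : rat := u%:~R; set ea : rat := e%:~R; set Aa : rat := A%:~R; set Ba : rat := B%:~R.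
have hA' : ua ^+ 2 - ea ^+ 2 = Aa ^+ 2 by rewrite /ua /ea /Aa -!rmorphXn -intrB hA.
have hB' : ua ^+ 2 - 4 * ea ^+ 2 = Ba ^+ 2.
  by rewrite /ua /ea /Ba -!rmorphXn -[4 : rat]/((4 : int)%:~R) -intrM -intrB hB.
have ea0 : ea != 0 by rewrite intr_eq0.
have uAp : ua + Aa != 0 by rewrite -intrD intr_eq0; apply/eqP; clear -u0 A0; lia.
have uAm : ua - Aa != 0 by rewrite -intrB intr_eq0; apply/eqP; clear -Au; lia.
have uBp : ua + Ba != 0 by rewrite -intrD intr_eq0; apply/eqP; clear -u0 B0; lia.
have ABp : Aa + Ba != 0.
  rewrite -intrD intr_eq0; apply/eqP => AB.
  have A00 : A = 0 by clear -AB A0 B0; lia.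
  have B00 : B = 0 by clear -AB A0 B0; lia.
  move: hA hB e2; rewrite A00 B00 expr0n /=; move: (u ^+ 2) (e ^+ 2) => ??; clear; lia.
set X := (ua + Aa) * (ua + Ba) / ea ^+ 2.
have e2n : ea ^+ 2 != 0 by rewrite expf_eq0 negb_and ea0 orbT.
have E1 : X - 1 = (ua + Aa) * (Aa + Ba) / ea ^+ 2.
  rewrite /X -{1}(divff e2n) -mulrBl; congr (_ / _).
  have Ee : ea ^+ 2 = ua ^+ 2 - Aa ^+ 2 by rewrite -hA'; ring.
  rewrite Ee; ring.
have E4 : X - 4 = (ua + Ba) * (Aa + Ba) / ea ^+ 2.
  rewrite /X -[4 in LHS](mulfK e2n) -mulrBl; congr (_ / _).
  have Ee : 4 * ea ^+ 2 = ua ^+ 2 - Ba ^+ 2 by rewrite -hB'; ring.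
  by rewrite Ee; ring.
have XE : X = (u + B)%:~R / (u - A)%:~R.
  rewrite intrD intrB -/ua -/Aa -/Ba /X.
  have Ee : ea ^+ 2 = (ua - Aa) * (ua + Aa).
    by transitivity (ua ^+ 2 - Aa ^+ 2); [rewrite -hA'; ring | ring].
  by rewrite Ee; field; rewrite uAm uAp.
exists X, ((ua + Aa) * (ua + Ba) * (Aa + Ba) / ea ^+ 3).
split.
  by rewrite E1 E4 /X; field.
split; first by rewrite /X !mulf_neq0 // invr_neq0.
split; first by rewrite -subr_eq0 E1 !mulf_neq0 // invr_neq0.
split; first by rewrite -subr_eq0 E4 !mulf_neq0 // invr_neq0.
have uA0 : 0 < u - A by clear -Au; lia.
have [h1 h2] := height_div (u + B) uA0.
rewrite XE; split.
  by apply: le_trans h1 _; rewrite ger0_norm; [clear -Bu; lia | clear -u0 B0; lia].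
by apply: le_trans h2 _; clear -A0; lia.
Qed.

Lemma base (u e A B : int) : case1 u e A B -> 0 <= u <= 12 -> 0 <= e -> 0 <= A -> 0 <= B -> False.
Proof.
case=> e0 [hA hB] /andP[u0 u12] ep A0 B0.
have e2 := sqr_ge0 e; have A2 := sqr_ge0 A; have B2 := sqr_ge0 B.
have Au : A <= u.
  rewrite leNgt; apply/negP => uA.
  have : u ^+ 2 < A ^+ 2 by rewrite ltr_pXn2r // ?nnegrE // ltW.
  clear -hA e2; move: hA e2; move: (u ^+ 2) (A ^+ 2) (e ^+ 2) => ???; lia.
have Bu : B <= u.
  rewrite leNgt; apply/negP => uB.
  have : u ^+ 2 < B ^+ 2 by rewrite ltr_pXn2r // ?nnegrE // ltW.
  clear -hB e2; move: hB e2; move: (u ^+ 2) (B ^+ 2) (e ^+ 2) => ???; lia.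
have eu : e <= u.
  rewrite leNgt; apply/negP => uB.
  have : u ^+ 2 < e ^+ 2 by rewrite ltr_pXn2r // ?nnegrE // ltW.
  clear -hA A2; move: hA A2; move: (u ^+ 2) (A ^+ 2) (e ^+ 2) => ???; lia.
case: u u0 u12 hA hB Au Bu eu => // un _ u12; case: e e0 ep e2 => // en e0 _ _.
case: A A0 A2 => // an _ _; case: B B0 B2 => // bn _ _.
rewrite !expr2 => hA hB Au Bu eu.
have H1 := chk_true; rewrite /chk in H1; move/allP: H1 => H1.
have := H1 un; rewrite mem_iota add0n leq0n andTb.
have -> : (un < 13)%N by clear -u12; lia.
move=> /(_ isT) H2'; move/allP: H2' => H2; have := H2 en; rewrite mem_iota add0n leq0n andTb.
have -> : (en < 13)%N by clear -u12 eu; lia.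
move=> /(_ isT) H3'; move/allP: H3' => H3; have := H3 an; rewrite mem_iota add0n leq0n andTb.
have -> : (an < 13)%N by clear -u12 Au; lia.
move=> /(_ isT) H4'; move/allP: H4' => H4; have := H4 bn; rewrite mem_iota add0n leq0n andTb.
have -> : (bn < 13)%N by clear -u12 Bu; lia.
move/(_ isT); apply/negP/negPn.
apply/and3P; split.
- by clear -e0; lia.
- by apply/eqP; clear -hA; lia.
- by apply/eqP; clear -hB; lia.
Qed.

Local Close Scope ring_scope.
Local Open Scope ring_scope.
Lemma no_case1 (u e A B : int) : case1 u e A B -> False.
Proof.
have [N hN] : exists N, (`|u| <= N)%N by exists `|u|%N.
elim: N u e A B hN => [|N IH] u e A B hN [e0 [hA hB]].
  have u0 : u = 0 by move: hN; rewrite leqn0 absz_eq0 => /eqP.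
  move: hA e0; rewrite u0 expr0n /= sub0r => hA.
  have e2 := sqr_ge0 e; have A2 := sqr_ge0 A.
  have : e ^+ 2 = 0 by clear -hA e2 A2; move: hA e2 A2; move: (e ^+ 2) (A ^+ 2) => ??; lia.
  by move/eqP; rewrite expf_eq0 /= => ->.
set U := `|u|; set E := `|e|; set A' := `|A|; set B' := `|B|.
have c1 : case1 U E A' B'.
  rewrite /case1 /U /E /A' /B' !real_normK ?num_real //; split => //.
  by rewrite normr_eq0.
have U0 : 0 < U.
  rewrite /U normr_gt0; apply/eqP => u0; move: hA e0; rewrite u0 expr0n /= sub0r => hA.
  have e2 := sqr_ge0 e; have A2 := sqr_ge0 A.
  have : e ^+ 2 = 0 by clear -hA e2 A2; move: hA e2 A2; move: (e ^+ 2) (A ^+ 2) => ??; lia.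
  by move/eqP; rewrite expf_eq0 /= => ->.
case: (lerP U 12) => hU.
  apply: (base c1); rewrite ?normr_ge0 //; apply/andP; split => //; exact: ltW.
have [X [Y [hY [X0 [X1 [X4 [hn hd]]]]]]] := partD c1 U0 (normr_ge0 A) (normr_ge0 B).
have [u2 [e2 [A2 [B2 [c2 hb]]]]] := partCq hY X0 X1 X4.
have lt : `|u2| < U.
  have h12 : u2 ^+ 2 < U ^+ 2.
    apply: (le_lt_trans hb).
    have : 4 * (`|numq X| + denq X) <= 12 * U by clear -hn hd; lia.
    move/le_lt_trans; apply; rewrite expr2 ltr_pM2r //.
  rewrite ltNge; apply/negP => h.
  have : U ^+ 2 <= `|u2| ^+ 2 by rewrite ler_pXn2r // ?nnegrE // ltW.
  by rewrite (real_normK (num_real u2)) leNgt h12.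
apply: (IH u2 e2 A2 B2) => //.
move: lt; rewrite /U -!abszE ltz_nat => lt.
by rewrite -ltnS; apply: leq_trans hN.
Qed.
Lemma tang_sq (x0 y0 l r s c : rat) : y0 ^+ 2 = x0 * (x0 - r) * (x0 - s) ->
  2 * y0 * l = 3 * x0 ^+ 2 - 2 * (r + s) * x0 + r * s -> l ^+ 2 = 3 * x0 - (r + s) ->
  (c = 0 \/ c = r \/ c = s) ->
  (y0 - l * (x0 - c)) ^+ 2 = (x0 - c) ^+ 3.
Proof.
move=> E1 E2 E3 hc.
have -> : (y0 - l * (x0 - c)) ^+ 2 = y0 ^+ 2 - (x0 - c) * (2 * y0 * l) + (x0 - c) ^+ 2 * l ^+ 2 by ring.
rewrite E1 E2 E3; case: hc => [->|[->|->]]; ring.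
Qed.

Lemma partB (x0 y0 l r s n : rat) : y0 != 0 -> y0 ^+ 2 = x0 * (x0 - r) * (x0 - s) ->
  2 * y0 * l = 3 * x0 ^+ 2 - 2 * (r + s) * x0 + r * s -> l ^+ 2 = 3 * x0 - (r + s) ->
  r * s = - n ^+ 2 -> r != 0 -> s != 0 ->
  exists X Y : rat, Y ^+ 2 = X * (X - 1) * (X - 4) /\ X != 0 /\ X != 1 /\ X != 4.
Proof.
move=> y00 E1 E2 E3 rsn r0 s0.
have nz : x0 * (x0 - r) * (x0 - s) != 0 by rewrite -E1 sqrf_eq0.
have x00 : x0 != 0 by apply: contraNneq nz => ->; rewrite !mul0r.
have x0r : x0 - r != 0 by apply: contraNneq nz => ->; rewrite mulr0 mul0r.
have x0s : x0 - s != 0 by apply: contraNneq nz => ->; rewrite mulr0.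
pose a c := (y0 - l * (x0 - c)) / (x0 - c).
have asq : forall c, (c = 0 \/ c = r \/ c = s) -> x0 - c != 0 -> (a c) ^+ 2 = x0 - c.
  move=> c hc hn; rewrite /a expr_div_n (tang_sq E1 E2 E3 hc); field; exact: hn.
have a0 := asq 0 (or_introl erefl); rewrite subr0 in a0; have {}a0 := a0 x00.
have ar := asq r (or_intror (or_introl erefl)) x0r.
have as_ := asq s (or_intror (or_intror erefl)) x0s.
have sum : a 0 + a r + a s = - l.
  have hy : y0 * (y0 / x0 + y0 / (x0 - r) + y0 / (x0 - s)) = y0 * (2 * l).
    transitivity (y0 ^+ 2 * ((x0 - r) * (x0 - s) + x0 * (x0 - s) + x0 * (x0 - r)) /
        (x0 * (x0 - r) * (x0 - s))); first by field; rewrite x00 x0r x0s.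
    rewrite E1; transitivity ((x0 - r) * (x0 - s) + x0 * (x0 - s) + x0 * (x0 - r)).
      by field; rewrite x00 x0r x0s.
    transitivity (2 * y0 * l); last by ring.
    rewrite E2; ring.
  have hy2 := mulfI y00 hy.
  rewrite /a subr0; move: hy2.
  have -> : (y0 - l * x0) / x0 + (y0 - l * (x0 - r)) / (x0 - r) + (y0 - l * (x0 - s)) / (x0 - s) =
    (y0 / x0 + y0 / (x0 - r) + y0 / (x0 - s)) - 3 * l by field; rewrite x00 x0r x0s.
  by move->; ring.
have pair : a 0 * a r + a 0 * a s + a r * a s = 0.
  have : 2 * (a 0 * a r + a 0 * a s + a r * a s) = 0.
    transitivity ((a 0 + a r + a s) ^+ 2 - (a 0 ^+ 2 + a r ^+ 2 + a s ^+ 2)); first by ring.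
    by rewrite sum a0 ar as_ sqrrN E3; ring.
  by move/eqP; rewrite mulf_eq0 pnatr_eq0 /= => /eqP.
have a00 : a 0 != 0 by apply: contraNneq x00 => h; rewrite -a0 h expr0n.
set t := a s / a 0; set w := a r / a 0.
have hw : w * (1 + t) = - t.
  apply/eqP; rewrite -subr_eq0; apply/eqP.
  transitivity ((a 0 * a r + a 0 * a s + a r * a s) / a 0 ^+ 2).
    by rewrite /t /w; field.
  by rewrite pair mul0r.
have hr : r = a 0 ^+ 2 * (1 - w ^+ 2).
  rewrite /w; transitivity (a 0 ^+ 2 - a r ^+ 2); first by rewrite a0 ar; ring.
  by field.
have hs : s = a 0 ^+ 2 * (1 - t ^+ 2).
  rewrite /t; transitivity (a 0 ^+ 2 - a s ^+ 2); first by rewrite a0 as_; ring.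
  by field.
exists (2 * t + 2), (2 * n * (1 + t) / a 0 ^+ 2); split; last split; last split.
- have hn2 : n ^+ 2 = - (r * s) by rewrite rsn opprK.
  transitivity (4 * n ^+ 2 * (1 + t) ^+ 2 / a 0 ^+ 4); first by field.
  rewrite hn2 hr hs.
  transitivity (- 4 * ((1 + t) ^+ 2 - (w * (1 + t)) ^+ 2) * (1 - t ^+ 2)); first by field.
  by rewrite hw; ring.
- apply/eqP => h.
  have t1 : t = -1 by apply/eqP; rewrite -subr_eq0; apply/eqP;
    transitivity ((2 * t + 2) / 2); [field|rewrite h mul0r].
  by move: hw; rewrite t1 addrN mulr0 opprK => /eqP; rewrite eq_sym oner_eq0.
- apply/eqP => h.
  have t1 : t = - (1 / 2) by apply/eqP; rewrite -subr_eq0; apply/eqP;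
    transitivity ((2 * t + 2 - 1) / 2); [field|rewrite h subrr mul0r].
  have w1 : w = 1.
    apply/eqP; rewrite -subr_eq0; apply/eqP.
    transitivity (2 * (w * (1 + t) + t)); first by rewrite t1; field.
    by rewrite hw addNr mulr0.
  by move: r0; rewrite hr w1 expr1n subrr mulr0 eqxx.
- apply/eqP => h.
  have t1 : t = 1 by apply/eqP; rewrite -subr_eq0; apply/eqP;
    transitivity ((2 * t + 2 - 4) / 2); [field|rewrite h subrr mul0r].
  by move: s0; rewrite hs t1 expr1n subrr mulr0 eqxx.
Qed.

Local Close Scope ring_scope.
Local Open Scope ring_scope.

Lemma add_self_fix (a b : rat) P : P = ec_add a b P P -> P = EInf.
Proof.
case: P => // x y; rewrite /ec_add eqxx.
case: ifP => // hy; set l := (_ / _); set x3 := (_ - _ - _ - _).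
case=> hx hyy; move: hy; rewrite -hx subrr mulr0 add0r in hyy.
by rewrite -hyy eqxx.
Qed.

Lemma dbl_inf (a b x y : rat) : ec_add a b (EAff x y) (EAff x y) = EInf -> y = 0.
Proof.
rewrite /ec_add eqxx; case: ifP => // /eqP hy _.
lra.
Qed.

Lemma roots3 (al b x1 x2 x3 : rat) : b != 0 ->
  x1 ^+ 3 + al * x1 ^+ 2 + b * x1 = 0 -> x2 ^+ 3 + al * x2 ^+ 2 + b * x2 = 0 ->
  x3 ^+ 3 + al * x3 ^+ 2 + b * x3 = 0 -> x1 != x2 -> x1 != x3 -> x2 != x3 ->
  exists r s, [/\ r != 0, s != 0, al = - (r + s) & b = r * s].
Proof.
move=> b0 h1 h2 h3 d12 d13 d23.
have key : forall r s, r != 0 -> s != 0 -> r != s ->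
   r ^+ 3 + al * r ^+ 2 + b * r = 0 -> s ^+ 3 + al * s ^+ 2 + b * s = 0 ->
   exists r s, [/\ r != 0, s != 0, al = - (r + s) & b = r * s].
  move=> r s r0 s0 rs hr hs.
  have qr : r ^+ 2 + al * r + b = 0.
    by apply: (mulIf r0); rewrite mul0r -hr; ring.
  have qs : s ^+ 2 + al * s + b = 0.
    by apply: (mulIf s0); rewrite mul0r -hs; ring.
  have hal : al = - (r + s).
    have : (r - s) * (r + s + al) = 0 by rewrite -[RHS](subrr 0) -{1}qr -qs; ring.
    move/eqP; rewrite mulf_eq0 subr_eq0 (negbTE rs) /= => /eqP h.
    by apply/eqP; rewrite -subr_eq0 opprK addrC; apply/eqP.
  exists r, s; split => //.
  by apply/eqP; rewrite -subr_eq0; apply/eqP; rewrite -qr hal; ring.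
case: (eqVneq x1 0) => [z1|n1].
  apply: (key x2 x3) => //; [by rewrite -z1 eq_sym | by rewrite -z1 eq_sym].
case: (eqVneq x2 0) => [z2|n2].
  by apply: (key x1 x3) => //; rewrite -z2 eq_sym.
exact: (key x1 x2).
Qed.

Unset Implicit Arguments.
Theorem proposition7p9 (alpha n : rat) (hn : n != 0) :
  ~ torsion_iso_Z2xZ6 alpha (- n ^+ 2).
Proof.
case=> f [finj ftor fsurj fhom].
set b := - n ^+ 2 in ftor fsurj fhom *.
have b0 : b != 0 by rewrite oppr_eq0 expf_neq0.
have fZ : f (0, 0) = EInf.
  apply: (@add_self_fix alpha b); rewrite -fhom /=; by rewrite addr0 addr0.
have oc : forall u, on_curve alpha b (f u) by move=> u; case: (ftor u).
have tor2 : forall u : 'Z_2 * 'Z_6, u != (0, 0) -> (u.1 + u.1, u.2 + u.2) == (0, 0) ->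
    exists x, f u = EAff x 0 /\ x ^+ 3 + alpha * x ^+ 2 + b * x = 0.
  move=> u u0 /eqP uu.
  have h := fhom u u; rewrite uu fZ in h.
  case E: (f u) h => [|x y] h.
    by move: u0; rewrite -fZ in E; rewrite (finj _ _ E) eqxx.
  have y0 := dbl_inf (esym h); exists x; split; first by rewrite y0.
  by have := oc u; rewrite E /= y0 expr0n /= => hh; rewrite -hh.
have [x1 [f1 h1]] := tor2 (1, 0) isT isT.
have [x2 [f2 h2]] := tor2 (0, 3%:R) isT isT.
have [x3 [f3 h3]] := tor2 (1, 3%:R) isT isT.
have dx : forall u v x y, f u = EAff x 0 -> f v = EAff y 0 -> u != v -> x != y.
  move=> u v x y fu fv uv; apply: contra uv => /eqP xy.
  by apply/eqP; apply: finj; rewrite fu fv xy.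
have [r [s [r0 s0 hal hb]]] := roots3 b0 h1 h2 h3 (dx _ _ _ _ f1 f2 isT)
   (dx _ _ _ _ f1 f3 isT) (dx _ _ _ _ f2 f3 isT).
have fQQ := fhom (0, 2%:R) (0, 2%:R).
have fQ4 := fhom (0, 2%:R) (0, 4%:R).
have e04 : ((0 : 'Z_2) + 0, (2%:R : 'Z_6) + 2%:R) = (0, 4%:R) by apply/eqP.
have e06 : ((0 : 'Z_2) + 0, (2%:R : 'Z_6) + 4%:R) = (0, 0) by apply/eqP.
rewrite e04 in fQQ; rewrite e06 fZ in fQ4.
have Q4n : f (0, 4%:R) <> EInf by rewrite -fZ => /finj/eqP.
have Qn : f (0, 2%:R) <> EInf by rewrite -fZ => /finj/eqP.
case EQ: (f (0, 2%:R)) Qn fQQ fQ4 => [|x0 y0]; first by [].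
move=> _ fQQ fQ4.
have ocQ := oc (0, 2%:R); rewrite EQ /= in ocQ.
move: fQQ; rewrite /ec_add eqxx; case: ifP => [_ h|hy].
  by move: Q4n; rewrite -h.
set l := (_ / _); set x2' := (_ - _ - _ - _) => fQQ.
move: fQ4; rewrite fQQ /ec_add; case: ifP => [/eqP hx _|]; last by move=> _ [].
have y00 : y0 != 0 by apply: contraFneq hy => ->; rewrite oppr0 eqxx.
have E2 : 2 * y0 * l = 3 * x0 ^+ 2 - 2 * (r + s) * x0 + r * s.
  rewrite /l mulrC divfK; last by rewrite mulf_neq0.
  by rewrite hal hb; ring.
have E3 : l ^+ 2 = 3 * x0 - (r + s).
  by move: hx; rewrite /x2' hal => hx; rewrite -[RHS]opprK; lra.
have E1 : y0 ^+ 2 = x0 * (x0 - r) * (x0 - s) by rewrite ocQ hal hb; ring.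
have [X [Y [hY [X0 [X1 X4]]]]] := partB y00 E1 E2 E3 (esym hb) r0 s0.
have [u [e [A [B [c1 _]]]]] := partCq hY X0 X1 X4.
exact: (no_case1 c1).
Qed.
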